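(* For every $k\geq 1$, $\mathcal{L}_{\mathsf{SAFA}(|H|=k)}\subsetneq\mathcal{L}_{\mathsf{SAFA}(|H|=k+1)}$, where $\mathcal{L}_{\mathsf{SAFA}(|H|=j)}$ denotes the class of data languages accepted by SAFA $M=(Q,\Sigma\times D,q_0,F,H,\delta)$ with exactly $|H|=j$ sets.
   Context: $D$ is a fixed countably infinite set of data values; for a finite alphabet $\Sigma$, a data language is a subset of $(\Sigma\times D)^*$. A set augmented finite automaton (SAFA) is a tuple $M=(Q,\Sigma\times D,q_0,F,H,\delta)$: $Q$ finite set of states, $q_0\in Q$ initial, $F\subseteq Q$ final, $H=\{h_1,\dots,h_m\}$ a finite collection of (names of) sets of data values, $\delta\subseteq Q\times\Sigma\times C\times OP\times Q$ with $C=\{p(h_i),\,!p(h_i): h_i\in H\}$, $OP=\{-\}\cup\{\mathsf{ins}(h_i):h_i\in H\}$. Configurations are $(q,\langle S_1,\dots,S_m\rangle)$ with $S_i\subseteq D$ finite; initially state $q_0$ and all sets empty. On reading $(a,d)$, a transition $(q,a,\alpha,op,q')$ from the current state may be taken if $\alpha=p(h_i)$ and $d\in S_i$, or $\alpha=\,!p(h_i)$ and $d\notin S_i$; then the state becomes $q'$ and if $op=\mathsf{ins}(h_j)$ the value $d$ is added to $S_j$ ($op=-$ changes nothing). A word is accepted if some run reads it entirely and ends in $F$. *)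

(* Defs.v *)
From mathcomp Require Import all_boot.
Set Implicit Arguments. Unset Strict Implicit. Unset Printing Implicit Defensive.

(* Conditions p(h_i) / !p(h_i) over the set names H = 'I_m. *)
Inductive cond (m : nat) : Type :=
  | Cin  of 'I_m
  | Cnot of 'I_m.

(* Operations: None = "-", Some j = ins(h_j). *)
Definition op (m : nat) := option 'I_m.

Record SAFA (Sigma : finType) (m : nat) : Type := {
  st    : finType;
  q0    : st;
  final : pred st;
  delta : st -> Sigma -> cond m -> op m -> st -> bool
}.

Section Sem.
Variables (D : countType) (Sigma : finType) (m : nat).

Definition sets := 'I_m -> seq D.

Definition sat (c : cond m) (S : sets) (d : D) : bool :=
  match c with
  | Cin i => d \in S i
  | Cnot i => d \notin S i
  end.

Definition upd (o : op m) (S : sets) (d : D) : sets :=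
  match o with
  | None => S
  | Some j => fun i => if i == j then d :: S i else S i
  end.

Fixpoint acc_from (M : SAFA Sigma m) (q : st M) (S : sets) (w : seq (Sigma * D)) : Prop :=
  match w with
  | [::] => final q
  | (a, d) :: w' =>
      exists (c : cond m) (o : op m) (q' : st M),
        [/\ delta q a c o q', sat c S d & acc_from q' (upd o S d) w']
  end.

Definition accepts (M : SAFA Sigma m) (w : seq (Sigma * D)) : Prop :=
  acc_from (q0 M) (fun _ => [::]) w.

Definition in_SAFA_class (L : seq (Sigma * D) -> Prop) : Prop :=
  exists M : SAFA Sigma m, forall w, L w <-> accepts M w.

End Sem.

(* Main.v *)
Require Import Defs.
From mathcomp Require Import all_boot zify.
Set Implicit Arguments. Unset Strict Implicit. Unset Printing Implicit Defensive.

Section General.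
Variables (D : countType) (Sigma : finType) (m : nat).

Definition eqS (S S' : sets D m) := forall i, S i =i S' i.

Lemma sat_eqS c S S' d : eqS S S' -> sat c S d = sat c S' d.
Proof. by case: c => i /= H; rewrite H. Qed.

Lemma upd_eqS o S S' d : eqS S S' -> eqS (upd o S d) (upd o S' d).
Proof.
case: o => [j|] //= H i x; case: (i == j) => //.
  by rewrite !in_cons H.
by rewrite H.
Qed.

Lemma acc_eqS (M : SAFA Sigma m) (w : seq (Sigma * D)) : forall (q : st M) S S',
  eqS S S' -> acc_from q S w -> acc_from q S' w.
Proof.
elim: w => [|[a d] w IH] q S S' HS //=.
move=> [c [o [q' [H1 H2 H3]]]]; exists c, o, q'; split => //.
  by rewrite -(sat_eqS _ _ HS).
by apply: IH H3; apply: upd_eqS.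
Qed.

Definition tyS (S : sets D m) (d : D) : {set 'I_m} := [set i | d \in S i].

Definition Lat (j : nat) (w : seq (Sigma * D)) :=
  forall d : D, count (fun x : Sigma * D => x.2 == d) w <= j.
End General.

Section Upper.
Variables (D : countType) (Sigma : finType) (j : nat).

Definition CM : SAFA Sigma j :=
  @Build_SAFA Sigma j unit tt (fun _ => true)
    (fun _ _ c o _ => match c, o with Cnot i, Some i' => i == i' | _, _ => false end).

Lemma tyS_upd (S : sets D j) i d e :
  tyS (upd (Some i) S d) e = if d == e then i |: tyS S e else tyS S e.
Proof.
apply/setP => x; rewrite !inE /=.
case: (boolP (d == e)) => [/eqP <-|Hde]; rewrite !inE.
  by case: (x == i); rewrite ?in_cons ?eqxx.
case: (x == i) => //; rewrite in_cons.
by rewrite eq_sym (negPf Hde).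
Qed.

Lemma CM_acc (w : seq (Sigma * D)) : forall (S : sets D j),
  @acc_from D Sigma j CM tt S w <->
  forall d, count (fun x : Sigma * D => x.2 == d) w + #|tyS S d| <= j.
Proof.
elim: w => [|[a d] w IH] S /=.
  split => // _ d; rewrite add0n.
  by apply: leq_trans (max_card _) _; rewrite card_ord.
split.
  move=> [c [o [q' [H1 H2 H3]]]].
  case: c H1 H2 => // i; case: o H3 => // i' H3 /eqP Ei; subst i' => /= Hi e.
  case: q' H3 => H3; move: (proj1 (IH _) H3 e); rewrite tyS_upd.
  case: (boolP (d == e)) => [/eqP <-|] /=.
    rewrite cardsU1 inE Hi /=; lia.
  move=> _ /= H0; lia.
move=> H.
case: (pickP (fun i => i \notin tyS S d)) => [i Hi|Hn].
  exists (Cnot i), (Some i), tt; split => //=.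
    by move: Hi; rewrite inE.
  apply/IH => e; move: (H e); rewrite tyS_upd.
  case: (boolP (d == e)) => [/eqP <-|] /=.
    rewrite cardsU1 Hi /=; lia.
  move=> _ /= H0; lia.
have : tyS S d = setT by apply/setP => i; move: (Hn i) => /= /negbFE ->; rewrite inE.
move=> E; move: (H d); rewrite E cardsT card_ord eqxx /=; lia.
Qed.

Lemma upper : in_SAFA_class j (@Lat D Sigma j).
Proof.
exists CM => w; rewrite /accepts /Lat CM_acc.
have E : forall d, #|tyS (fun _ : 'I_j => [::] : seq D) d| = 0.
  by move=> d; apply/eqP; rewrite cards_eq0; apply/eqP/setP => i; rewrite !inE.
by split => H d; move: (H d); rewrite E addn0.
Qed.
End Upper.
Section Incl.
Variables (D : countType) (Sigma : finType) (k : nat).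

Definition liftc (c : cond k) : cond k.+1 :=
  match c with Cin i => Cin (lift ord_max i) | Cnot i => Cnot (lift ord_max i) end.
Definition lifto (o : op k) : op k.+1 := omap (lift ord_max) o.
Definition unliftc (c : cond k.+1) : option (cond k) :=
  match c with
  | Cin i => omap (@Cin k) (unlift ord_max i)
  | Cnot i => omap (@Cnot k) (unlift ord_max i) end.
Definition unlifto (o : op k.+1) : option (op k) :=
  match o with None => Some None | Some j => omap Some (unlift ord_max j) end.

Definition liftM (M : SAFA Sigma k) : SAFA Sigma k.+1 :=
  @Build_SAFA Sigma k.+1 _ (q0 M) (@final _ _ M)
    (fun q a c o q' => match unliftc c, unlifto o with
                       | Some c0, Some o0 => delta q a c0 o0 q'
                       | _, _ => false end).

Definition Rel (S : sets D k) (S' : sets D k.+1) :=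
  forall j : 'I_k, S' (lift ord_max j) =i S j.

Lemma Rel_upd S S' o d : Rel S S' -> Rel (upd o S d) (upd (lifto o) S' d).
Proof.
move=> H j x; case: o => [j0|] /=; last exact: H.
rewrite (inj_eq (@lift_inj _ ord_max)); case: (j == j0) => //.
  by rewrite !in_cons H.
by rewrite H.
Qed.

Lemma liftM_acc (M : SAFA Sigma k) (w : seq (Sigma * D)) : forall (q : st M) S S', Rel S S' ->
  (@acc_from D Sigma k M q S w <-> @acc_from D Sigma k.+1 (liftM M) q S' w).
Proof.
elim: w => [|[a d] w IH] q S S' HS //=.
split.
  move=> [c [o [q' [H1 H2 H3]]]]; exists (liftc c), (lifto o), q'; split.
  - rewrite /=; case: c H2 {H3} H1 => i _ /=; rewrite liftK /=;
      by case: o => [j|] //=; rewrite liftK.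
  - by case: c H2 {H1 H3} => i /=; rewrite HS.
by apply/(IH q' (upd o S d) (upd (lifto o) S' d) (Rel_upd _ _ HS)).
move=> [c [o [q' [H1 H2 H3]]]].
move: H1 => /=.
case Ec: (unliftc c) => [c0|] //; case Eo: (unlifto o) => [o0|] // H1.
have Ho : o = lifto o0.
  case: o Eo {H3} => [j|] /=; last by case=> <-.
  by case: unliftP => // j' -> [<-].
have Hc : c = liftc c0.
  by case: c Ec {H2} => i /=; case: unliftP => // j' -> [<-].
subst o c.
exists c0, o0, q'; split => //.
  by case: c0 H2 {Ec H1} => i /=; rewrite HS.
by apply/(IH q' (upd o0 S d) (upd (lifto o0) S' d) (Rel_upd _ _ HS)).
Qed.

Lemma incl (L : seq (Sigma * D) -> Prop) : in_SAFA_class k L -> in_SAFA_class k.+1 L.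
Proof.
move=> [M HM]; exists (liftM M) => w; rewrite HM /accepts.
by apply: liftM_acc.
Qed.
End Incl.
Section Runs.
Variables (D : countType) (Sigma : finType) (k : nat) (M : SAFA Sigma k)
  (x0 : Sigma * D).

Definition run (q : st M) (S : sets D k) (w : seq (Sigma * D))
  (qs : nat -> st M) (Ss : nat -> sets D k) :=
  [/\ qs 0 = q, Ss 0 = S,
     (forall p, p < size w -> exists c o,
        [/\ delta (qs p) (nth x0 w p).1 c o (qs p.+1),
            sat c (Ss p) (nth x0 w p).2 &
            eqS (Ss p.+1) (upd o (Ss p) (nth x0 w p).2)])
   & final (qs (size w))].

Lemma acc_run (w : seq (Sigma * D)) : forall (q : st M) S,
  acc_from q S w -> exists qs Ss, run q S w qs Ss.
Proof.
elim: w => [|[a d] w IH] q S /=.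
  by move=> Hf; exists (fun _ => q), (fun _ => S); split.
move=> [c [o [q' [H1 H2 H3]]]].
have [qs [Ss [E1 E2 E3 E4]]] := IH _ _ H3.
exists (fun p => if p is p'.+1 then qs p' else q).
exists (fun p => if p is p'.+1 then Ss p' else S).
split => //.
case => [|p] /= Hp.
  by exists c, o; rewrite E1 E2; split.
exact: E3.
Qed.

Lemma run_acc (w : seq (Sigma * D)) : forall (q : st M) S qs Ss,
  run q S w qs Ss -> acc_from q S w.
Proof.
elim: w => [|[a d] w IH] q S qs Ss [E1 E2 E3 E4] /=.
  by rewrite -E1.
have [c [o [H1 H2 H3]]] := E3 0 (ltn0Sn _).
exists c, o, (qs 1); rewrite -E1 -E2; split => //.
apply: (acc_eqS H3).
apply: (IH _ _ (fun p => qs p.+1) (fun p => Ss p.+1)).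
split => //.
by move=> p Hp; apply: (E3 p.+1).
Qed.

Section R.
Variables (q : st M) (S : sets D k) (w : seq (Sigma * D)) (qs : nat -> st M)
  (Ss : nat -> sets D k) (Hr : run q S w qs Ss).

Lemma step_mono p d : p < size w -> tyS (Ss p) d \subset tyS (Ss p.+1) d.
Proof.
case: Hr => _ _ E _ /E [c [o [_ _ H]]].
apply/subsetP => i; rewrite !inE H.
case: o {H} => [j|] //=; case: (i == j) => // Hd.
by rewrite in_cons Hd orbT.
Qed.

Lemma step_other p d : p < size w -> (nth x0 w p).2 != d ->
  tyS (Ss p.+1) d = tyS (Ss p) d.
Proof.
case: Hr => _ _ E _ /E [c [o [_ _ H]]] Hne.
apply/setP => i; rewrite !inE H.
case: o {H} => [j|] //=; case: (i == j) => //.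
by rewrite in_cons eq_sym (negPf Hne).
Qed.

Lemma mono_le p n d : p + n <= size w ->
  tyS (Ss p) d \subset tyS (Ss (p + n)) d.
Proof.
elim: n => [|n IH] H; first by rewrite addn0.
apply: subset_trans (IH _) _; first lia.
rewrite addnS; apply: step_mono; lia.
Qed.

Lemma const_le p n d : p + n <= size w ->
  (forall p'', p <= p'' < p + n -> (nth x0 w p'').2 != d) ->
  tyS (Ss (p + n)) d = tyS (Ss p) d.
Proof.
elim: n => [|n IH] H Hn; first by rewrite addn0.
rewrite addnS step_other; first apply: IH; try lia.
  by move=> p'' Hp; apply: Hn; lia.
apply: Hn; lia.
Qed.

Lemma replace p x : p < size w ->
  tyS (Ss p.+1) (nth x0 w p).2 = tyS (Ss p) (nth x0 w p).2 ->
  tyS (Ss p) x = tyS (Ss p) (nth x0 w p).2 ->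
  run q S (set_nth x0 w p ((nth x0 w p).1, x)) qs Ss.
Proof.
move=> Hp Hst Hx.
set y := (nth x0 w p).2 in Hst Hx.
have Mx : forall i, (x \in Ss p i) = (y \in Ss p i).
  by move=> i; move/setP: Hx => /(_ i); rewrite !inE.
have My : forall i, (y \in Ss p.+1 i) = (y \in Ss p i).
  by move=> i; move/setP: Hst => /(_ i); rewrite !inE.
case: Hr => E1 E2 E3 E4.
have Hs : size (set_nth x0 w p ((nth x0 w p).1, x)) = size w.
  by rewrite size_set_nth; apply/maxn_idPr.
split => //; last by rewrite Hs.
move=> p' Hp'; rewrite Hs in Hp'.
rewrite nth_set_nth /=.
case: (eqVneq p' p) => [->|_]; last exact: E3.
have [c [o [H1 H2 H3]]] := E3 p Hp.
exists c, o; split => //=.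
  by case: c H2 {H1 H3} => i /=; rewrite Mx.
move=> i z; rewrite H3.
case: o H3 {H1} => [j|] H3 //=.
case: (eqVneq i j) => [->|//].
have yj : y \in Ss p j.
  by rewrite -My H3 /= eqxx in_cons eqxx.
have xj : x \in Ss p j by rewrite Mx.
rewrite !in_cons.
case: (eqVneq z y) => [->|_]; first by rewrite yj !orbT.
by case: (eqVneq z x) => [->|_] //=; rewrite xj.
Qed.
End R.
End Runs.
Section Words.
Variables (D : countType) (Sigma : finType) (a0 : Sigma) (f : nat -> D)
  (finj : injective f).

Definition RW N : seq (Sigma * D) := [seq (a0, f i) | i <- iota 0 N].
Definition WW n N := flatten (nseq n (RW N)).

Lemma size_WW n N : size (WW n N) = n * N.
Proof.
elim: n => [|n IH] //=; rewrite /WW /= size_cat -/(WW n N) IH.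
by rewrite size_map size_iota mulSn.
Qed.

Lemma nth_WW x0 n N r i : r < n -> i < N -> nth x0 (WW n N) (r * N + i) = (a0, f i).
Proof.
elim: r n => [|r IH] [|n] //= Hr Hi; rewrite /WW /= nth_cat size_map size_iota.
  by rewrite mul0n add0n Hi (nth_map 0) ?size_iota // nth_iota.
rewrite ifN; last lia.
have -> : r.+1 * N + i - N = r * N + i by rewrite mulSn; lia.
exact: IH.
Qed.

Lemma count_RW N d : count (fun x : Sigma * D => x.2 == d) (RW N) <= 1.
Proof.
rewrite /RW count_map.
have -> : count (preim (fun i => (a0, f i)) (fun x : Sigma * D => x.2 == d)) (iota 0 N)
  = count (pred1 d) (map f (iota 0 N)) by rewrite count_map.
rewrite count_uniq_mem ?leq_b1 //.
by rewrite (map_inj_uniq finj) iota_uniq.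
Qed.

Lemma count_RW1 N a : a < N -> count (fun x : Sigma * D => x.2 == f a) (RW N) = 1.
Proof.
move=> Ha; rewrite /RW count_map.
have -> : count (preim (fun i => (a0, f i)) (fun x : Sigma * D => x.2 == f a)) (iota 0 N)
  = count (pred1 (f a)) (map f (iota 0 N)) by rewrite count_map.
rewrite count_uniq_mem; first by rewrite map_f // mem_iota; lia.
by rewrite (map_inj_uniq finj) iota_uniq.
Qed.

Lemma count_WW n N P : count P (WW n N) = n * count P (RW N).
Proof.
elim: n => [|n IH] //=; rewrite /WW /= count_cat -/(WW n N) IH.
by rewrite mulSn.
Qed.
End Words.
Lemma lower (D : countType) (Sigma : finType) (a0 : Sigma) (f : nat -> D)
  (finj : injective f) (k : nat) (M : SAFA Sigma k) :
  ~ (forall w, @Lat D Sigma k.+1 w <-> accepts M w).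
Proof.
move=> HM.
pose N := #|{: 'I_k.+1 * {set 'I_k}}|.+1.
pose w := WW a0 f k.+1 N.
pose x0 := (a0, f 0).
have Hsz : size w = k.+1 * N by rewrite size_WW.
have Lw : Lat k.+1 w.
  move=> d; rewrite count_WW; have := count_RW a0 finj N d; nia.
have [qs [Ss Hr]] := acc_run x0 (proj1 (HM w) Lw).
pose stat (i : 'I_N) (r : 'I_k.+1) :=
  tyS (Ss (r * N + i).+1) (f i) == tyS (Ss (r * N + i)) (f i).
have Hex : forall i : 'I_N, exists r, stat i r.
  move=> i; case: (pickP (stat i)) => [r Hr'|Hn]; first by exists r.
  exfalso.
  have strict : forall r, r < k.+1 ->
      #|tyS (Ss (r * N + i)) (f i)| < #|tyS (Ss (r * N + i).+1) (f i)|.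
    move=> r Hrk.
    have Hsub := step_mono Hr (f i) (_ : r * N + i < size w).
    have Hp : r * N + i < size w by rewrite Hsz; have := ltn_ord i; nia.
    case: (eqVproper (Hsub Hp)) => [E|]; last exact: proper_card.
    by move: (Hn (Ordinal Hrk)); rewrite /stat /= E eqxx.
  have key : forall r, r <= k -> r <= #|tyS (Ss (r * N + i)) (f i)|.
    elim=> [|r IH] Hrk //.
    have H1 := strict r (ltnW Hrk).
    have H2 := IH (ltnW Hrk).
    have Hm := mono_le Hr (p := (r * N + i).+1) (n := N - 1) (f i).
    have E : (r * N + i).+1 + (N - 1) = r.+1 * N + i by rewrite mulSn; lia.
    rewrite E in Hm.
    have Hb : r.+1 * N + i <= size w by rewrite Hsz; have := ltn_ord i; nia.
    have H3 := subset_leq_card (Hm Hb).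
    lia.
  have := strict k (ltnSn k); have := key k (leqnn k).
  have := max_card (tyS (Ss (k * N + i).+1) (f i)); rewrite card_ord; lia.
pose rst (i : 'I_N) := odflt ord0 [pick r | stat i r].
have Hrst : forall i, stat i (rst i).
  move=> i; rewrite /rst; case: pickP => [r H|Hn] //=.
  by have [r Hr'] := Hex i; rewrite Hn in Hr'.
pose g (i : 'I_N) := (rst i, tyS (Ss (rst i * N + i)) (f i)).
have core : forall a b : 'I_N, a < b -> g a = g b -> False.
  move=> a b Hab [Er ET].
  pose r := rst b.
  pose p := r * N + b.
  have Hp : p < size w by rewrite Hsz /p; have := ltn_ord b; have := ltn_ord r; nia.
  have Hnth : nth x0 w p = (a0, f b) by rewrite /w nth_WW.
  have Hst : tyS (Ss p.+1) (nth x0 w p).2 = tyS (Ss p) (nth x0 w p).2.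
    by rewrite Hnth; apply/eqP; apply: Hrst.
  have Hx : tyS (Ss p) (f a) = tyS (Ss p) (nth x0 w p).2.
    rewrite Hnth /p /r -ET Er.
    have Hsa := Hrst a; rewrite /stat Er in Hsa; rewrite -(eqP Hsa).
    have E : (rst b * N + a).+1 + (b - a - 1) = rst b * N + b by lia.
    rewrite -E; apply: (const_le Hr).
      by rewrite E Hsz; have := ltn_ord b; have := ltn_ord (rst b); nia.
    move=> p'' Hp''.
    have E2 : p'' = rst b * N + (p'' - rst b * N) by lia.
    rewrite E2 /w nth_WW //=; last by have := ltn_ord b; lia.
    by rewrite (inj_eq finj); lia.
  have Hr2 := replace Hr Hp Hst Hx.
  have Hacc := run_acc Hr2.
  have := proj2 (HM _) Hacc (f a).
  have Hc : count (fun x : Sigma * D => x.2 == f a) w = k.+1.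
    by rewrite count_WW count_RW1 ?muln1.
  rewrite count_set_nth_ltn // Hnth Hc /= (inj_eq finj) eqxx.
  have -> : (f b == f a) = false by rewrite (inj_eq finj); lia.
  lia.
case: (boolP [exists a, exists b, (a != b) && (g a == g b)]).
  move=> /existsP [a /existsP [b /andP [Hab /eqP Hg]]].
  case: (ltngtP a b) => H.
  - exact: core H Hg.
  - exact: core H (esym Hg).
  - by move: Hab; rewrite (val_inj H) eqxx.
move=> Hno.
have inj : injective g.
  move=> a b Hg; apply/eqP; apply/negPn/negP => Hab.
  move/negP: Hno; apply; apply/existsP; exists a; apply/existsP; exists b.
  by rewrite Hab Hg eqxx.
have := leq_card g inj; rewrite card_ord /N; move=> H; have := ltnn #|{: 'I_k.+1 * {set 'I_k}}|; by rewrite H.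
Qed.

Theorem corollary1 (D : countType) (HD : exists f : nat -> D, injective f)
  (Sigma : finType) (a0 : Sigma) (k : nat) (hk : 1 <= k) :
  (forall L : seq (Sigma * D) -> Prop,
      in_SAFA_class k L -> in_SAFA_class k.+1 L) /\
  (exists L : seq (Sigma * D) -> Prop,
      in_SAFA_class k.+1 L /\ ~ in_SAFA_class k L).
Proof.
split; first exact: incl.
have [f finj] := HD.
exists (@Lat D Sigma k.+1); split; first exact: upper.
by move=> [M HM]; apply: (lower a0 finj (M := M)) => w; rewrite HM.
Qed.
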